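(* Let $x\in\mathrm{GF}(2^7)$ be such that the eight elements $0,1,x,x^3,x^7,x^{15},x^{31},x^{63}$ are pairwise distinct. Then the set $\{0,1,x,x^3,x^7,x^{15},x^{31},x^{63}\}$ is a subgroup of the additive group of $\mathrm{GF}(2^7)$ if and only if either $1+x=x^7$ or $1+x^3=x^7$. *)

(* Defs.v *)
From mathcomp Require Import all_boot all_order all_algebra all_field.
Set Implicit Arguments. Unset Strict Implicit. Unset Printing Implicit Defensive.
Import GRing.Theory.
Local Open Scope ring_scope.

Definition Sx (F : finFieldType) (x : F) : seq F :=
  [:: 0; 1; x; x ^+ 3; x ^+ 7; x ^+ 15; x ^+ 31; x ^+ 63].

Definition is_add_subgroup (F : finFieldType) (s : seq F) : Prop :=
  GRing.zmod_closed (fun y : F => y \in s).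

(* Main.v *)
Require Import Defs.
From mathcomp Require Import all_boot all_order all_algebra all_field.
Import GRing.Theory.
Local Open Scope ring_scope.

Section S.
Variable F : finFieldType.
Hypothesis hF : #|F| = (2 ^ 7)%N.

Lemma two0 : (2%:R : F) = 0.
Proof. apply/eqP; have := card_finPcharP hF (isT : prime 2); by case/andP. Qed.

Lemma sqD (a b : F) : (a + b) ^+ 2 = a ^+ 2 + b ^+ 2.
Proof. by rewrite sqrrD -mulr_natr two0 mulr0 addr0. Qed.

Lemma frobD (a b : F) k : (a + b) ^+ (2 ^ k) = a ^+ (2 ^ k) + b ^+ (2 ^ k).
Proof.
elim: k => [|k IH]; first by rewrite !expr1.
by rewrite expnSr !exprM IH sqD.
Qed.

Lemma oppE (a : F) : - a = a.
Proof. by apply/eqP; rewrite eq_sym -subr_eq0 opprK -mulr2n -mulr_natr two0 mulr0. Qed.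

Lemma xx (a : F) : a + a = 0.
Proof. by rewrite -mulr2n -mulr_natr two0 mulr0. Qed.

Lemma swapF (a b c : F) : a + b = c -> b = a + c.
Proof. by move=> <-; rewrite addrA xx add0r. Qed.

Lemma six (a b c : F) : a + b = c ->
  [/\ a+b=c, b+a=c, a+c=b & c+a=b] /\ (b+c=a /\ c+b=a).
Proof.
move=> h; have h1 := swapF _ _ _ h; have h2 : a = b + c by rewrite addrC in h; exact: swapF _ _ _ h.
split; [split|split].
- exact: h.
- by rewrite addrC.
- by rewrite -h1.
- by rewrite addrC -h1.
- by rewrite -h2.
- by rewrite addrC -h2.
Qed.

Variable x : F.
Hypothesis x0 : x != 0.

Lemma x127 : x ^+ 127 = 1.
Proof.
have := expf_card x; rewrite hF (_ : (2^7 = 127.+1)%N) // exprS => H.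
by apply: (mulfI x0); rewrite mulr1.
Qed.

Lemma pw n : x ^+ n = x ^+ (n %% 127).
Proof. by rewrite {1}(divn_eq n 127) exprD mulnC exprM x127 expr1n mul1r. Qed.

Lemma shift p q r k : x ^+ p + x ^+ q = x ^+ r ->
  x ^+ ((p * 2 ^ k + 2 ^ k - 1) %% 127) + x ^+ ((q * 2 ^ k + 2 ^ k - 1) %% 127)
  = x ^+ ((r * 2 ^ k + 2 ^ k - 1) %% 127).
Proof.
move=> H; have := congr1 (fun y => y ^+ (2 ^ k) * x ^+ (2 ^ k - 1)) H => /=.
rewrite frobD mulrDl -!exprM -!exprD -!pw.
have hk : (1 <= 2 ^ k)%N by rewrite expn_gt0.
by rewrite -!addnBA.
Qed.

End S.

Ltac use H h := let e1 := fresh in let e2 := fresh in let e3 := fresh in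
  let e4 := fresh in let e5 := fresh in let e6 := fresh in
  case: (six _ H _ _ _ h) => [[e1 e2 e3 e4] [e5 e6]]; rewrite ?e1 ?e2 ?e3 ?e4 ?e5 ?e6; clear e1 e2 e3 e4 e5 e6.

Theorem lemma6 (F : finFieldType) (hF : #|F| = (2 ^ 7)%N) (x : F)
  (hdist : uniq (Sx x)) :
  is_add_subgroup (Sx x) <-> (1 + x = x ^+ 7 \/ 1 + x ^+ 3 = x ^+ 7).
Proof.
have x0 : x != 0.
  by apply/eqP => E; move: hdist; rewrite /Sx E /= !inE eqxx /= ?orbT /= ?andbF.
have sh := shift _ hF x x0.
have X := xx _ hF; have SW := swapF _ hF.
split.
- case=> _ Hc.
  have : 1 - x \in Sx x by apply: Hc; rewrite !inE eqxx ?orbT.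
  rewrite (oppE _ hF) !inE.
  case/orP => [/eqP E|]; first by have := SW _ _ _ E; rewrite addr0 => E';
    move: hdist; rewrite /Sx E' /= !inE eqxx /= ?orbT /= ?andbF.
  case/orP => [/eqP E|]; first by have := SW _ _ _ E; rewrite X => E';
    move: hdist; rewrite /Sx E' /= !inE eqxx /= ?orbT /= ?andbF.
  case/orP => [/eqP E|]; first by move: E; rewrite addrC => /SW; rewrite X => /eqP; rewrite oner_eq0.
  case/orP => [/eqP E|].
    have h : x + x^+3 = x^+7 := sh 0 1 3 1 E.
    have E' : x^+7 = 1 by rewrite -h -E addrCA X addr0.
    by move: hdist; rewrite /Sx E' /= !inE eqxx /= ?orbT /= ?andbF.
  case/orP => [/eqP E|]; first by left.
  case/orP => [/eqP E|].
    have h : x^+7 + x^+15 = 1 := sh 0 1 15 3 E.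
    have E' : x^+7 = x.
      rewrite addrC in h; rewrite (SW _ _ _ h) -E addrAC X add0r //.
    by move: hdist; rewrite /Sx E' /= !inE eqxx /= ?orbT /= ?andbF.
  case/orP => [/eqP E|].
    have h : x^+3 + x^+7 = 1 := sh 0 1 31 2 E.
    by right; rewrite -h addrAC X add0r.
  move/eqP => E.
  have h : x^+63 + 1 = x^+31 := sh 0 1 63 6 E.
  have E' : x^+31 = x by rewrite -h -E addrAC X add0r.
  by move: hdist; rewrite /Sx E' /= !inE eqxx /= ?orbT /= ?andbF.
- case=> E; (split; first by rewrite inE eqxx);
    (suff: all (fun u => all (fun v => u - v \in Sx x) (Sx x)) (Sx x) by
      move=> /allP H u v Hu Hv; exact: (allP (H u Hu)));
    rewrite /= !(oppE _ hF) !addr0 !add0r !X.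
  + have h1 : x + x^+3 = x^+15 := sh 0 1 7 1 E.
    have h2 : x^+3 + x^+7 = x^+31 := sh 0 1 7 2 E.
    have h3 : x^+7 + x^+15 = x^+63 := sh 0 1 7 3 E.
    have h4 : x^+15 + x^+31 = 1 := sh 0 1 7 4 E.
    have h5 : x^+31 + x^+63 = x := sh 0 1 7 5 E.
    have h6 : x^+63 + 1 = x^+3 := sh 0 1 7 6 E.
    use hF E; use hF h1; use hF h2; use hF h3; use hF h4; use hF h5; use hF h6.
    by rewrite !inE !eqxx /= ?orbT.
  + have h1 : x + x^+7 = x^+15 := sh 0 3 7 1 E.
    have h2 : x^+3 + x^+15 = x^+31 := sh 0 3 7 2 E.
    have h3 : x^+7 + x^+31 = x^+63 := sh 0 3 7 3 E.
    have h4 : x^+15 + x^+63 = 1 := sh 0 3 7 4 E.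
    have h5 : x^+31 + 1 = x := sh 0 3 7 5 E.
    have h6 : x^+63 + x = x^+3 := sh 0 3 7 6 E.
    use hF E; use hF h1; use hF h2; use hF h3; use hF h4; use hF h5; use hF h6.
    by rewrite !inE !eqxx /= ?orbT.
Qed.
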